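(* Let $S$ be any one of the subspecies $33_3$, $33_4$, $35_3$, $35_4$, $37$, $38$ of isonemal fabrics. Then there exist orders $n$ such that every isonemal fabric of subspecies $S$, of order $n$, whose symmetry group is based on a level-1 lattice unit of area $5$, can be perfectly coloured by thick striping with $5$ colours in two different ways, in each of which the redundant cells form $2\times 2$ blocks arranged as the $(5,3)$ satin doubled.
   Context: Fabrics. Strands are parallel bands of unit width: warps are vertical, wefts horizontal, and warp $i$ and weft $j$ cross in the unit square cell $(i,j)$, $i,j\in\mathbb{Z}$. A (pre)fabric specifies at every cell which of the two crossing strands lies on top as seen from a fixed side; its design colours cell $(i,j)$ dark if the warp is on top and pale if the weft is on top. Designs are doubly periodic; a fabric is a prefabric that does not fall apart into separate layers. The order of a fabric is the common period of the dark/pale sequence along its strands. Symmetries. A symmetry is a pair $(g,\epsilon)$ where $g$ is an isometry of the plane mapping the set of strands onto itself and $\epsilon$ is either the identity or $\tau$, the reflection in the plane of the fabric (which reverses which strand is on top in every cell), such that the composite maps the fabric onto itself. They form the symmetry group $G_1$; those with $\epsilon$ the identity are side-preserving, the others side-reversing. A fabric is isonemal if $G_1$ acts transitively on its strands. Species. Species 33–39 consist of the isonemal fabrics whose symmetry group contains quarter turns (possibly composed with $\tau$) but no reflections or glide-reflections (type $p4$). A lattice unit of $G_1$ is a square whose corners are quarter-turn centres and whose sides are vectors $(M,N)$, $(-N,M)$ generating the translation lattice of $G_1$; its centre is also a quarter-turn centre. It is of level 1 if $M,N$ are relatively prime of opposite parity. If the level-1 unit has side vectors $v=(M_1,N_1)$,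 $w=(-N_1,M_1)$, the level-2 unit (same centre) has side vectors $v+w$, $v-w$, the level-3 unit is the level-1 unit doubled and the level-4 unit is the level-2 unit doubled; the group is then based on the level-1 unit of area $M_1^2+N_1^2$. A quarter-turn centre is marked $\square$ if the quarter turn about it is side-preserving and $\blacksquare$ if it needs composition with $\tau$. Subspecies: $33_3$: level 3, all corners and centres $\square$; $35_3$: level 3, all $\blacksquare$; $38$: level 3, one of corners/centre $\square$ and the other $\blacksquare$; $33_4$: level 4, all $\square$; $35_4$: level 4, all $\blacksquare$; $37$: level 4, mixed $\square$ and $\blacksquare$. Colouring. A colouring assigns a colour to each strand; it is perfect if every symmetry of the fabric permutes colours coherently (if it maps one strand of colour $a$ to one of colour $b$, it maps every strand of colour $a$ to a strand of colour $b$). Thick striping with $p$ colours colours consecutive parallel strands periodically $c_1,c_1,c_2,c_2,\dots,c_p,c_p,c_1,\dots$ in each direction, using the same $p$ colours for warps and wefts. A cell is redundant if its warp and weft have the same colour. The $(5,3)$ satin is the order-5 design with dark cells $(i,j)$, $j\equiv 2i\pmod 5$; the satin doubled is the design obtained by replacing each strand by two adjacent strands behaving identically, so that each cell becomes a $2\times2$ block; ''redundant blocks arranged as the $(5,3)$ satin doubled'' means that the set of redundant cells is congruent to the set of dark cells of this doubled design. *)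

(* Defs.v *)
From Stdlib Require Import ZArith Bool.
Open Scope Z_scope.

(** Cells are pairs (i,j) : Z*Z, cell (i,j) being the crossing of warp i
    (vertical) and weft j (horizontal).  We use the cell centres as
    coordinates: cell (i,j) has centre at the point (i,j) of the plane. *)

(** A design: [D (i,j) = true] iff cell (i,j) is dark (warp on top). *)
Definition design := Z * Z -> bool.

Inductive strand := Warp (i : Z) | Weft (j : Z).

(** Isometries of the plane mapping the set of strands onto itself:
    x |-> A x + t with A a signed permutation matrix and t in Z^2
    (in cell-centre coordinates).  [sw] = the coordinates are swapped,
    [n1]/[n2] = the first/second output coordinate is negated. *)
Record gmap := GMap { sw : bool; n1 : bool; n2 : bool; t1 : Z; t2 : Z }.

Definition sgn (b : bool) : Z := if b then -1 else 1.

Definition act_cell (g : gmap) (c : Z * Z) : Z * Z :=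
  let '(x, y) := if sw g then (snd c, fst c) else (fst c, snd c) in
  (sgn (n1 g) * x + t1 g, sgn (n2 g) * y + t2 g).

Definition act_strand (g : gmap) (s : strand) : strand :=
  match s with
  | Warp i => if sw g then Weft (sgn (n2 g) * i + t2 g)
              else Warp (sgn (n1 g) * i + t1 g)
  | Weft j => if sw g then Warp (sgn (n1 g) * j + t1 g)
              else Weft (sgn (n2 g) * j + t2 g)
  end.

(** [(g, e)] is a symmetry of the design ([e = true] means composed with
    tau, the reflection in the plane of the fabric).  If [g] exchanges
    warps and wefts, the colour of the image cell is reversed; tau reverses
    it once more. *)
Definition is_sym (D : design) (g : gmap) (e : bool) : Prop :=
  forall c, D (act_cell g c) = xorb (D c) (xorb (sw g) e).

Definition doubly_periodic (D : design) : Prop :=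
  exists p, 0 < p /\ forall i j, D (i + p, j) = D (i, j) /\ D (i, j + p) = D (i, j).

Definition falls_apart (D : design) : Prop :=
  exists A : strand -> Prop, (exists x, A x) /\ (exists y, ~ A y) /\
    forall i j, (A (Warp i) -> ~ A (Weft j) -> D (i, j) = true) /\
                (A (Weft j) -> ~ A (Warp i) -> D (i, j) = false).

Definition is_fabric (D : design) : Prop := doubly_periodic D /\ ~ falls_apart D.

Definition isonemal (D : design) : Prop :=
  forall x y, exists g e, is_sym D g e /\ act_strand g x = y.

Definition least_period (f : Z -> bool) (n : Z) : Prop :=
  0 < n /\ (forall k, f (k + n) = f k) /\
  forall m, 0 < m < n -> ~ (forall k, f (k + m) = f k).

Definition has_order (D : design) (n : Z) : Prop :=
  (forall i, least_period (fun j => D (i, j)) n) /\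
  (forall j, least_period (fun i => D (i, j)) n).

Definition orientation_reversing (g : gmap) : Prop :=
  (* det = -1: reflections and glide-reflections *)
  xorb (sw g) (xorb (n1 g) (n2 g)) = true.
Definition quarter_turn (g : gmap) : Prop :=
  sw g = true /\ n1 g <> n2 g.
Definition transl (a b : Z) : gmap := GMap false false false a b.

Definition type_p4 (D : design) : Prop :=
  (exists g e, is_sym D g e /\ quarter_turn g) /\
  (forall g e, is_sym D g e -> ~ orientation_reversing g).

Definition species_33_39 (D : design) : Prop :=
  is_fabric D /\ isonemal D /\ type_p4 D.

Definition lattice_generated (D : design) (M N : Z) : Prop :=
  forall a b, (exists e, is_sym D (transl a b) e) <->
              exists x y, a = x * M - y * N /\ b = x * N + y * M.

(** Quarter turn (by +90 degrees) about the point P/2 (doubled coordinates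
    P = (P1,P2), with P1 = P2 mod 2 so that it maps cells to cells). *)
Definition qt (P1 P2 : Z) : gmap :=
  GMap true true false ((P1 + P2) / 2) ((P2 - P1) / 2).

Inductive mark := Open
                | Filled .

Definition marked (D : design) (P1 P2 : Z) (m : mark) : Prop :=
  Z.even (P1 + P2) = true /\
  is_sym D (qt P1 P2) (match m with Open => false | Filled => true end).

(** A lattice unit of G1 with corner P/2 and sides (M,N), (-N,M), whose
    corners are marked [mc] and whose centre (P + (M-N, N+M))/2 is marked
    [mz]. *)
Definition lattice_unit (D : design) (P1 P2 M N : Z) (mc mz : mark) : Prop :=
  lattice_generated D M N /\ marked D P1 P2 mc /\
  marked D (P1 + (M - N)) (P2 + (N + M)) mz.

Definition level1 (M N : Z) : Prop := Z.gcd M N = 1 /\ Z.odd (M + N) = true.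

(** Side vector of the level-k unit built on the level-1 unit with side
    vector v = (M1,N1), w = (-N1,M1):
    level 1: v; level 2: v+w; level 3: 2v; level 4: 2(v+w). *)
Definition side_vec (k : nat) (M1 N1 : Z) : Z * Z :=
  match k with
  | 1%nat => (M1, N1)
  | 2%nat => (M1 - N1, N1 + M1)
  | 3%nat => (2 * M1, 2 * N1)
  | _ => (2 * (M1 - N1), 2 * (N1 + M1))
  end.

Inductive subspecies := S33_3 | S33_4 | S35_3 | S35_4 | S37 | S38.

Definition sub_level (S : subspecies) : nat :=
  match S with
  | S33_3 | S35_3 | S38 => 3%nat
  | S33_4 | S35_4 | S37 => 4%nat
  end.

Definition sub_marks (S : subspecies) (mc mz : mark) : Prop :=
  match S with
  | S33_3 | S33_4 => mc = Open /\ mz = Open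
  | S35_3 | S35_4 => mc = Filled /\ mz = Filled
  | S37 | S38 => mc <> mz
  end.

Definition in_subspecies (S : subspecies) (D : design) (M1 N1 : Z) : Prop :=
  species_33_39 D /\ level1 M1 N1 /\
  exists P1 P2 mc mz, sub_marks S mc mz /\
    lattice_unit D P1 P2 (fst (side_vec (sub_level S) M1 N1))
                         (snd (side_vec (sub_level S) M1 N1)) mc mz.

Definition colouring := strand -> Z.

Definition perfect (D : design) (col : colouring) : Prop :=
  forall g e, is_sym D g e ->
    forall x y, col x = col y -> col (act_strand g x) = col (act_strand g y).

Definition thick_striping (p : Z) (col : colouring) : Prop :=
  exists (a b : Z) (alpha beta : Z -> Z),
    (forall k l, 0 <= k < p -> 0 <= l < p -> alpha k = alpha l -> k = l) /\
    (forall k l, 0 <= k < p -> 0 <= l < p -> beta k = beta l -> k = l) /\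
    (forall k, 0 <= k < p -> exists l, 0 <= l < p /\ beta l = alpha k) /\
    (forall i, col (Warp i) = alpha (((i - a) / 2) mod p)) /\
    (forall j, col (Weft j) = beta (((j - b) / 2) mod p)).

Definition redundant (col : colouring) (c : Z * Z) : Prop :=
  col (Warp (fst c)) = col (Weft (snd c)).

Definition satin53_doubled (c : Z * Z) : Prop :=
  (snd c / 2) mod 5 = (2 * (fst c / 2)) mod 5.

Definition redundant_satin_doubled (col : colouring) : Prop :=
  exists g : gmap, forall c, redundant col (act_cell g c) <-> satin53_doubled c.

Definition good_colouring (D : design) (col : colouring) : Prop :=
  thick_striping 5 col /\ perfect D col /\ redundant_satin_doubled col.

Definition different_colourings (c1 c2 : colouring) : Prop :=
  exists x y, ~ (c1 x = c1 y <-> c2 x = c2 y).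

(* Main.v *)
Require Import Defs.
From Stdlib Require Import ZArith Lia Bool List Classical.
Import ListNotations.
Open Scope Z_scope.

Definition colW a i := ((i - a)/2) mod 5.
Definition colF b m c j := (m * (((j - b)/2) mod 5) + c) mod 5.
Definition mkcol a b m c : colouring :=
  fun s => match s with Warp i => colW a i | Weft j => colF b m c j end.

Definition sym_fun (D:design) (f : Z*Z -> Z*Z) (x:bool) := forall c, D (f c) = xorb (D c) x.

Lemma sym_fun_of D g e : is_sym D g e -> sym_fun D (act_cell g) (xorb (sw g) e).
Proof. intros H c. apply H. Qed.

Lemma sym_fun_comp D f1 f2 x1 x2 : sym_fun D f1 x1 -> sym_fun D f2 x2 ->
  sym_fun D (fun c => f1 (f2 c)) (xorb x2 x1).
Proof. intros H1 H2 c. rewrite H1, H2. now rewrite xorb_assoc. Qed.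

Lemma trans_from D f x finv g e u v :
  sym_fun D f x -> (forall d, f (finv d) = d) -> is_sym D g e ->
  (forall c, act_cell g c = (fst (f c) + u, snd (f c) + v)) ->
  exists e', is_sym D (transl u v) e'.
Proof.
  intros Hf Hs Hg Hc. exists (xorb x (xorb (sw g) e)).
  intros [d1 d2].
  assert (E: act_cell (transl u v) (d1,d2) = (d1+u, d2+v))
    by (unfold act_cell, transl, sgn; cbn -[Z.mul Z.add Z.opp Z.sub]; f_equal; ring).
  rewrite E. change (sw (transl u v)) with false.
  set (c := finv (d1,d2)).
  assert (Hfd : f c = (d1,d2)) by apply Hs.
  replace (d1+u, d2+v) with (act_cell g c) by (rewrite Hc, Hfd; reflexivity).
  replace (D (d1,d2)) with (D (f c)) by (rewrite Hfd; reflexivity).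
  rewrite Hg, Hf. destruct (D c), x, (sw g), e; reflexivity.
Qed.

Definition hinv T1 T2 (d : Z*Z) : Z*Z := (snd d - T2, - fst d + T1).
Lemma h_hinv T1 T2 d : act_cell (GMap true true false T1 T2) (hinv T1 T2 d) = d.
Proof. destruct d as [d1 d2]; unfold act_cell, hinv, sgn; cbn -[Z.mul Z.add Z.opp Z.sub]. f_equal; ring. Qed.

Lemma classify D M N T1 T2 eh g e :
  lattice_generated D M N -> is_sym D (GMap true true false T1 T2) eh -> is_sym D g e ->
  ~ orientation_reversing g ->
  (sw g = false /\ n1 g = false /\ n2 g = false /\
     exists x y, t1 g = x*M - y*N /\ t2 g = x*N + y*M) \/
  (sw g = false /\ n1 g = true /\ n2 g = true /\
     exists x y, t1 g - (T1 - T2) = x*M - y*N /\ t2 g - (T1 + T2) = x*N + y*M) \/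
  (sw g = true /\ n1 g = true /\ n2 g = false /\
     exists x y, t1 g - T1 = x*M - y*N /\ t2 g - T2 = x*N + y*M) \/
  (sw g = true /\ n1 g = false /\ n2 g = true /\
     exists x y, t1 g + T2 = x*M - y*N /\ t2 g - T1 = x*N + y*M).
Proof.
  intros HL Hh Hg Hor.

  assert (H1 := sym_fun_of _ _ _ Hh).
  assert (H2 := sym_fun_comp _ _ _ _ _ H1 H1).
  assert (H3 := sym_fun_comp _ _ _ _ _ H1 H2).
  destruct g as [s a1 a2 u1 u2]; simpl in *.
  destruct s, a1, a2; try (exfalso; apply Hor; reflexivity).
  - right; right; left. repeat split.
    apply HL. eapply (trans_from D _ _ (hinv T1 T2) _ _ _ _ H1 (h_hinv T1 T2) Hg).
    intros [c1 c2]; unfold act_cell, sgn; cbn -[Z.mul Z.add Z.opp Z.sub]. f_equal; ring.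
  - right; right; right. repeat split.
    apply HL. eapply (trans_from D _ _ (fun d => hinv T1 T2 (hinv T1 T2 (hinv T1 T2 d))) _ _ _ _ H3).
    + intro d. cbv beta. now rewrite !h_hinv.
    + exact Hg.
    + intros [c1 c2]; unfold act_cell, sgn; cbn -[Z.mul Z.add Z.opp Z.sub]. f_equal; ring.
  - right; left. repeat split.
    apply HL. eapply (trans_from D _ _ (fun d => hinv T1 T2 (hinv T1 T2 d)) _ _ _ _ H2).
    + intro d. cbv beta. now rewrite !h_hinv.
    + exact Hg.
    + intros [c1 c2]; unfold act_cell, sgn; cbn -[Z.mul Z.add Z.opp Z.sub]. f_equal; ring.
  - left. repeat split. apply HL. exists e. exact Hg.
Qed.

Lemma cong_lat m M' N' k1 k2 x y : m*N' - M' = 5*k1 -> m*M' + N' = 5*k2 ->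
  m*(x*N'+y*M') = (x*M' - y*N') + 5*(x*k1+y*k2).
Proof. intros H1 H2.
  assert (E: m*(x*N'+y*M') - (x*M' - y*N') = x*(m*N' - M') + y*(m*M'+N')) by ring.
  rewrite H1, H2 in E. lia. Qed.

Ltac fin := unfold mkcol, colW, colF in *; Z.div_mod_to_equations; lia.

Lemma perfect_col D M' N' m T1 T2 eh a c :
  (m = 2 \/ m = 3) -> (m*N' - M') mod 5 = 0 -> (m*M' + N') mod 5 = 0 ->
  lattice_generated D (2*M') (2*N') -> is_sym D (GMap true true false T1 T2) eh ->
  (forall g e, is_sym D g e -> ~ orientation_reversing g) ->
  (T1 - T2) mod 2 = 1 ->
  ((m+1)*c - ((T1-T2-1)/2 - m*a)) mod 5 = 0 ->
  perfect D (mkcol a (T2 - a) m c).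
Proof.
  intros Hm Hc1 Hc2 HL Hh Hp4 Hodd Hcc g e Hg x y Hxy.
  apply Z.mod_divide in Hc1; [|lia]. apply Z.mod_divide in Hc2; [|lia].
  destruct Hc1 as [k1 Hk1]. destruct Hc2 as [k2 Hk2].
  assert (Hk1' : m*N' - M' = 5*k1) by lia. assert (Hk2' : m*M' + N' = 5*k2) by lia.
  destruct (classify _ _ _ _ _ _ _ _ HL Hh Hg (Hp4 g e Hg)) as [H|[H|[H|H]]];
  destruct H as (Hs & Ha & Hb & x0 & y0 & E1 & E2);
  assert (HK := cong_lat m M' N' k1 k2 x0 y0 Hk1' Hk2');
  set (A := x0*M' - y0*N') in *; set (B := x0*N' + y0*M') in *;
  (assert (EA : x0 * (2 * M') - y0 * (2 * N') = 2*A) by (unfold A; ring));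
  (assert (EB : x0 * (2 * N') + y0 * (2 * M') = 2*B) by (unfold B; ring));
  rewrite EA in E1; rewrite EB in E2; clearbody A B; clear EA EB;
  set (K := x0*k1+y0*k2) in HK; clearbody K; clear Hk1 Hk2 Hk1' Hk2' HL Hh Hp4 Hg;
  destruct g as [s b1 b2 u1 u2]; cbn [sw n1 n2 t1 t2] in *; subst s b1 b2;
  destruct Hm as [-> | ->];
  destruct x, y; unfold act_strand, sgn; cbn [sw n1 n2 t1 t2] in *; try fin; symmetry; symmetry in Hxy; fin.

Qed.

Lemma odd_T D M' N' T1 T2 eh :
  lattice_generated D (2*M') (2*N') -> is_sym D (GMap true true false T1 T2) eh ->
  (forall g e, is_sym D g e -> ~ orientation_reversing g) -> isonemal D ->
  (T1 - T2) mod 2 = 1.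
Proof.
  intros HL Hh Hp4 Hiso.
  destruct (Hiso (Warp 0) (Warp 1)) as [g [e [Hg Hact]]].
  destruct (classify _ _ _ _ _ _ _ _ HL Hh Hg (Hp4 g e Hg)) as [H|[H|[H|H]]];
  destruct H as (Hs & Ha & Hb & x0 & y0 & E1 & E2);
  set (A := x0*M' - y0*N') in *;
  (assert (EA : x0 * (2 * M') - y0 * (2 * N') = 2*A) by (unfold A; ring));
  rewrite EA in E1; clearbody A;
  destruct g as [s b1 b2 u1 u2]; cbn [sw n1 n2 t1 t2] in *; subst s b1 b2;
  unfold act_strand, sgn in Hact; cbn [sw n1 n2 t1 t2] in Hact;
  try discriminate; injection Hact; intro; clear E2 EA; Z.div_mod_to_equations; lia.
Qed.

Lemma thick a b m c : (m = 2 \/ m = 3) -> thick_striping 5 (mkcol a b m c).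
Proof.
  intros Hm. exists a, b, (fun k => k), (fun l => (m*l + c) mod 5).
  split; [|split; [|split; [|split]]].
  - auto.
  - intros k l Hk Hl E. destruct Hm as [-> | ->]; Z.div_mod_to_equations; lia.
  - intros k Hk. destruct Hm as [-> | ->].
    + exists ((3*(k - c)) mod 5). split. apply Z.mod_pos_bound; lia.
      Z.div_mod_to_equations; lia.
    + exists ((2*(k - c)) mod 5). split. apply Z.mod_pos_bound; lia.
      Z.div_mod_to_equations; lia.
  - intros i; reflexivity.
  - intros j; reflexivity.
Qed.

Lemma satin a b m c : (m = 2 \/ m = 3) -> redundant_satin_doubled (mkcol a b m c).
Proof.
  intros [-> | ->].
  - exists (GMap true false false (a + 2*c) b). intros [x y].
    unfold redundant, satin53_doubled, act_cell, sgn; cbn [sw n1 n2 t1 t2 fst snd].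
    rewrite !Z.mul_1_l. unfold mkcol, colW, colF. split; intro; Z.div_mod_to_equations; lia.
  - exists (GMap false false false (a + 2*c) b). intros [x y].
    unfold redundant, satin53_doubled, act_cell, sgn; cbn [sw n1 n2 t1 t2 fst snd].
    rewrite !Z.mul_1_l. unfold mkcol, colW, colF. split; intro; Z.div_mod_to_equations; lia.
Qed.

Lemma differ b m c b' c' : different_colourings (mkcol 0 b m c) (mkcol 1 b' m c').
Proof.
  exists (Warp 0), (Warp 1). unfold mkcol, colW. simpl.
  intros [H _]. specialize (H eq_refl). discriminate.
Qed.

Lemma forall_part D M' N' m T1 T2 eh :
  (m = 2 \/ m = 3) -> (m*N' - M') mod 5 = 0 -> (m*M' + N') mod 5 = 0 ->
  lattice_generated D (2*M') (2*N') -> is_sym D (GMap true true false T1 T2) eh ->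
  (forall g e, is_sym D g e -> ~ orientation_reversing g) -> isonemal D ->
  exists col1 col2, good_colouring D col1 /\ good_colouring D col2 /\
       different_colourings col1 col2.
Proof.
  intros Hm Hc1 Hc2 HL Hh Hp4 Hiso.
  assert (Hodd := odd_T _ _ _ _ _ _ HL Hh Hp4 Hiso).
  set (u0 := (T1 - T2 - 1)/2).
  set (inv := if Z.eqb m 2 then 2 else 4).
  set (c0 := (inv * (u0 - m*0)) mod 5).
  set (c1 := (inv * (u0 - m*1)) mod 5).
  exists (mkcol 0 (T2 - 0) m c0), (mkcol 1 (T2 - 1) m c1).
  split; [|split]; [ | | apply differ].
  - split; [apply thick; auto | split; [ | apply satin; auto]].
    apply (perfect_col _ M' N' _ T1 T2 eh); auto.
    unfold c0, inv, u0; destruct Hm as [-> | ->]; simpl Z.eqb; cbv iota;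
      Z.div_mod_to_equations; lia.
  - split; [apply thick; auto | split; [ | apply satin; auto]].
    apply (perfect_col _ M' N' _ T1 T2 eh); auto.
    unfold c1, inv, u0; destruct Hm as [-> | ->]; simpl Z.eqb; cbv iota;
      Z.div_mod_to_equations; lia.
Qed.
Definition tbl (rows : list Z) : design :=
  fun c => Z.testbit (nth (Z.to_nat (fst c mod 20)) rows 0) (snd c mod 20).

Lemma tbl_mod rows x y : tbl rows (x,y) = tbl rows (x mod 20, y mod 20).
Proof. unfold tbl; simpl. now rewrite !Z.mod_mod by lia. Qed.

Lemma tbl_eq rows x y x' y' : x mod 20 = x' mod 20 -> y mod 20 = y' mod 20 ->
  tbl rows (x,y) = tbl rows (x',y').
Proof. intros H1 H2. unfold tbl; simpl. now rewrite H1, H2. Qed.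

Definition zr20 : list Z := map Z.of_nat (seq 0 20).
Lemma In_zr20 x : 0 <= x < 20 -> In x zr20.
Proof.
  intros H. unfold zr20. replace x with (Z.of_nat (Z.to_nat x)) by lia.
  apply in_map. apply in_seq. lia.
Qed.
Lemma In_mod20 x : In (x mod 20) zr20.
Proof. apply In_zr20. apply Z.mod_pos_bound. lia. Qed.

Fixpoint fa {A} (f : A -> bool) (l : list A) : bool :=
  match l with [] => true | x :: r => if f x then fa f r else false end.
Fixpoint ex {A} (f : A -> bool) (l : list A) : bool :=
  match l with [] => false | x :: r => if f x then true else ex f r end.

Lemma fa_spec {A} (f : A -> bool) l : fa f l = true -> forall x, In x l -> f x = true.
Proof.
  induction l as [|a r IH]; simpl; [tauto|].
  destruct (f a) eqn:E; [|discriminate]. intros H x [->|Hx]; auto.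
Qed.
Lemma fa_complete {A} (f : A -> bool) l : (forall x, In x l -> f x = true) -> fa f l = true.
Proof.
  induction l as [|a r IH]; simpl; [auto|]. intros H.
  rewrite (H a (or_introl eq_refl)). apply IH. auto.
Qed.
Lemma ex_spec {A} (f : A -> bool) l : ex f l = true -> exists x, In x l /\ f x = true.
Proof.
  induction l as [|a r IH]; simpl; [discriminate|].
  destruct (f a) eqn:E; intros H.
  - exists a; auto.
  - destruct (IH H) as [x [? ?]]; exists x; auto.
Qed.

Section S.
Variable rows : list Z.
Let D := tbl rows.

Definition check_sym (g : gmap) (e : bool) : bool :=
  fa (fun i => fa (fun j => Bool.eqb (D (act_cell g (i,j))) (xorb (D (i,j)) (xorb (sw g) e))) zr20) zr20.

Lemma D_mod x y : D (x,y) = D (x mod 20, y mod 20).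
Proof. apply tbl_mod. Qed.

Lemma sgn_mod n y t : (sgn n * y + t) mod 20 = (sgn n * (y mod 20) + t) mod 20.
Proof. destruct n; cbn [sgn]; Z.div_mod_to_equations; lia. Qed.

Lemma act_mod g x y : D (act_cell g (x,y)) = D (act_cell g (x mod 20, y mod 20)).
Proof.
  unfold D, act_cell. destruct (sw g); cbn [fst snd]; apply tbl_eq; apply sgn_mod.
Qed.

Lemma act_tshift s a b u1 u2 u1' u2' c : u1 mod 20 = u1' mod 20 -> u2 mod 20 = u2' mod 20 ->
  D (act_cell (GMap s a b u1 u2) c) = D (act_cell (GMap s a b u1' u2') c).
Proof.
  intros H1 H2. destruct c as [x y]. unfold D, act_cell; destruct s; cbn [fst snd sw n1 n2 t1 t2]; apply tbl_eq;
  destruct a, b; cbn [sgn]; Z.div_mod_to_equations; lia.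
Qed.

Lemma sym_shift s a b u1 u2 u1' u2' e : u1 mod 20 = u1' mod 20 -> u2 mod 20 = u2' mod 20 ->
  is_sym D (GMap s a b u1 u2) e -> is_sym D (GMap s a b u1' u2') e.
Proof.
  intros H1 H2 H c. rewrite <- (act_tshift s a b u1 u2 u1' u2' c H1 H2). apply H.
Qed.

Lemma check_sym_sound g e : check_sym g e = true -> is_sym D g e.
Proof.
  intros H [x y]. rewrite act_mod. rewrite (D_mod x y).
  apply Bool.eqb_prop.
  exact (fa_spec _ _ (fa_spec _ _ H _ (In_mod20 x)) _ (In_mod20 y)).
Qed.

Lemma check_sym_complete g e : is_sym D g e -> check_sym g e = true.
Proof.
  intros H. apply fa_complete; intros i _. apply fa_complete; intros j _.
  rewrite H. apply Bool.eqb_reflx.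
Qed.


Lemma D_eq x y x' y' : x mod 20 = x' mod 20 -> y mod 20 = y' mod 20 -> D (x,y) = D (x',y').
Proof. apply tbl_eq. Qed.

Definition step (i k : Z) : bool := ex (fun j => negb (D (i,j)) && D (k,j)) zr20.
Definition chkW : bool := fa (fun i =>
   ex (fun k => step i k && step k (i+1)) zr20 && ex (fun k => step (i+1) k && step k i) zr20) zr20.
Definition chkF : bool := fa (fun j => ex (fun i => D (i,j)) zr20 && ex (fun i => negb (D (i,j))) zr20) zr20.

Lemma step_spec i k i' k' : step i k = true -> i mod 20 = i' mod 20 -> k mod 20 = k' mod 20 ->
  exists j, D (i',j) = false /\ D (k',j) = true.
Proof.
  intros H Hi Hk. apply ex_spec in H. destruct H as [j [_ Hj]].
  apply andb_prop in Hj. destruct Hj as [Hj1 Hj2]. apply negb_true_iff in Hj1.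
  exists j. split.
  - rewrite <- Hj1. apply D_eq; auto.
  - rewrite <- Hj2. apply D_eq; auto.
Qed.

Lemma chkW_spec : chkW = true -> forall i,
  (exists k, (exists j, D (i,j) = false /\ D (k,j) = true) /\ (exists j, D (k,j) = false /\ D (i+1,j) = true)) /\
  (exists k, (exists j, D (i+1,j) = false /\ D (k,j) = true) /\ (exists j, D (k,j) = false /\ D (i,j) = true)).
Proof.
  intros H i. pose proof (fa_spec _ _ H (i mod 20) (In_mod20 i)) as H1.
  apply andb_prop in H1. destruct H1 as [H1 H2].
  apply ex_spec in H1. apply ex_spec in H2.
  destruct H1 as [k [_ Hk]]. destruct H2 as [k' [_ Hk']].
  apply andb_prop in Hk. apply andb_prop in Hk'. destruct Hk as [Hk1 Hk2]. destruct Hk' as [Hk1' Hk2'].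
  split; [exists (k + (i - i mod 20)) | exists (k' + (i - i mod 20))]; split.
  - eapply step_spec; [exact Hk1| |]; Z.div_mod_to_equations; lia.
  - eapply step_spec; [exact Hk2| |]; Z.div_mod_to_equations; lia.
  - eapply step_spec; [exact Hk1'| |]; Z.div_mod_to_equations; lia.
  - eapply step_spec; [exact Hk2'| |]; Z.div_mod_to_equations; lia.
Qed.

Lemma chkF_spec : chkF = true -> forall j,
  (exists i, D (i,j) = true) /\ (exists i, D (i,j) = false).
Proof.
  intros H j. pose proof (fa_spec _ _ H (j mod 20) (In_mod20 j)) as H1.
  apply andb_prop in H1. destruct H1 as [H1 H2].
  apply ex_spec in H1. apply ex_spec in H2.
  destruct H1 as [i [_ Hi]]. destruct H2 as [i' [_ Hi']].
  apply negb_true_iff in Hi'.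
  split; [exists i | exists i'].
  - rewrite <- Hi. apply D_eq; [|rewrite Z.mod_mod]; lia.
  - rewrite <- Hi'. apply D_eq; [|rewrite Z.mod_mod]; lia.
Qed.

Lemma not_falls : chkW = true -> chkF = true -> ~ falls_apart D.
Proof.
  intros HW HF [A [[x Hx] [[y Hy] HA]]].
  assert (HW1 : forall i j, A (Warp i) -> D (i,j) = false -> A (Weft j)).
  { intros i j Ha Hd. destruct (classic (A (Weft j))) as [?|Hn]; auto.
    rewrite (proj1 (HA i j) Ha Hn) in Hd. discriminate. }
  assert (HF1 : forall i j, A (Weft j) -> D (i,j) = true -> A (Warp i)).
  { intros i j Ha Hd. destruct (classic (A (Warp i))) as [?|Hn]; auto.
    rewrite (proj2 (HA i j) Ha Hn) in Hd. discriminate. }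
  assert (Hup : forall i, A (Warp i) -> A (Warp (i+1))).
  { intros i Hi. destruct (proj1 (chkW_spec HW i)) as [k [[j [H1 H2]] [j' [H3 H4]]]]. eauto. }
  assert (Hdn : forall i, A (Warp (i+1)) -> A (Warp i)).
  { intros i Hi. destruct (proj2 (chkW_spec HW i)) as [k [[j [H1 H2]] [j' [H3 H4]]]]. eauto. }
  assert (H0 : exists i0, A (Warp i0)).
  { destruct x as [i|j]; [eauto|]. destruct (proj1 (chkF_spec HF j)) as [i Hi]. eauto. }
  destruct H0 as [i0 Hi0].
  assert (Hall : forall n : nat, A (Warp (i0 + Z.of_nat n)) /\ A (Warp (i0 - Z.of_nat n))).
  { induction n as [|n IH].
    - simpl. rewrite Z.add_0_r, Z.sub_0_r. auto.
    - destruct IH as [IH1 IH2]. split.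
      + replace (i0 + Z.of_nat (S n)) with ((i0 + Z.of_nat n) + 1) by lia. auto.
      + apply Hdn. replace (i0 - Z.of_nat (S n) + 1) with (i0 - Z.of_nat n) by lia. auto. }
  assert (HallW : forall k, A (Warp k)).
  { intros k. destruct (Z_le_gt_dec i0 k).
    - replace k with (i0 + Z.of_nat (Z.to_nat (k - i0))) by lia. apply Hall.
    - replace k with (i0 - Z.of_nat (Z.to_nat (i0 - k))) by lia. apply Hall. }
  apply Hy. destruct y as [k|j]; auto.
  destruct (proj2 (chkF_spec HF j)) as [i Hi]. eauto.
Qed.

Definition red (s : strand) := match s with Warp i => Warp (i mod 20) | Weft j => Weft (j mod 20) end.
Definition match_mod (s s' : strand) : bool :=
  match s, s' with
  | Warp i, Warp k => (i mod 20 =? k mod 20)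
  | Weft i, Weft k => (i mod 20 =? k mod 20)
  | _, _ => false end.
Definition strands20 := map Warp zr20 ++ map Weft zr20.

Lemma red_in x : In (red x) strands20.
Proof. unfold strands20. apply in_app_iff. destruct x; [left|right]; cbn [red]; apply in_map, In_mod20. Qed.

Lemma iso_lift g e x y : is_sym D g e -> match_mod (act_strand g (red x)) (red y) = true ->
  exists g', is_sym D g' e /\ act_strand g' x = y.
Proof.
  intros Hs Hm. destruct g as [s a b u1 u2].
  destruct x as [i|i], y as [k|k], s; cbn [act_strand red match_mod sw n1 n2 t1 t2] in Hm;
    try discriminate; apply Z.eqb_eq in Hm.
  - exists (GMap false a b (k - sgn a * i) u2). split.
    + eapply sym_shift; [|reflexivity|exact Hs]. destruct a; cbn [sgn] in *; Z.div_mod_to_equations; lia.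
    + cbn [act_strand sw n1 n2 t1 t2]. f_equal; ring.
  - exists (GMap true a b u1 (k - sgn b * i)). split.
    + eapply sym_shift; [reflexivity| |exact Hs]. destruct b; cbn [sgn] in *; Z.div_mod_to_equations; lia.
    + cbn [act_strand sw n1 n2 t1 t2]. f_equal; ring.
  - exists (GMap true a b (k - sgn a * i) u2). split.
    + eapply sym_shift; [|reflexivity|exact Hs]. destruct a; cbn [sgn] in *; Z.div_mod_to_equations; lia.
    + cbn [act_strand sw n1 n2 t1 t2]. f_equal; ring.
  - exists (GMap false a b u1 (k - sgn b * i)). split.
    + eapply sym_shift; [reflexivity| |exact Hs]. destruct b; cbn [sgn] in *; Z.div_mod_to_equations; lia.
    + cbn [act_strand sw n1 n2 t1 t2]. f_equal; ring.
Qed.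

Definition chkIso (syms : list (gmap * bool)) : bool :=
  fa (fun ge => check_sym (fst ge) (snd ge)) syms &&
  fa (fun x => fa (fun y => ex (fun ge => match_mod (act_strand (fst ge) x) y) syms) strands20) strands20.

Lemma isonemal_of syms : chkIso syms = true -> isonemal D.
Proof.
  intros H x y. apply andb_prop in H. destruct H as [H1 H2].
  pose proof (fa_spec _ _ (fa_spec _ _ H2 _ (red_in x)) _ (red_in y)) as H3.
  apply ex_spec in H3. destruct H3 as [[g e] [Hin Hm]].
  pose proof (check_sym_sound _ _ (fa_spec _ _ H1 _ Hin)) as Hs. simpl in Hs, Hm.
  destruct (iso_lift g e x y Hs Hm) as [g' [? ?]]. eauto.
Qed.

Definition bools := [false; true].
Lemma In_bools b : In b bools.
Proof. destruct b; simpl; auto. Qed.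

Definition chkNoRefl : bool :=
  fa (fun s => fa (fun a => fa (fun b => fa (fun u1 => fa (fun u2 =>
    if xorb s (xorb a b) then negb (check_sym (GMap s a b u1 u2) false) &&
                              negb (check_sym (GMap s a b u1 u2) true) else true)
  zr20) zr20) bools) bools) bools.

Lemma noRefl : chkNoRefl = true -> forall g e, is_sym D g e -> ~ orientation_reversing g.
Proof.
  intros H [s a b u1 u2] e Hs Hor. unfold orientation_reversing in Hor; cbn [sw n1 n2] in Hor.
  apply (sym_shift _ _ _ _ _ (u1 mod 20) (u2 mod 20)) in Hs; [|rewrite Z.mod_mod; lia|rewrite Z.mod_mod; lia].
  apply check_sym_complete in Hs.
  pose proof (fa_spec _ _ (fa_spec _ _ (fa_spec _ _ (fa_spec _ _ (fa_spec _ _ H s (In_bools s)) a (In_bools a)) b (In_bools b)) _ (In_mod20 u1)) _ (In_mod20 u2)) as H1.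
  cbv beta in H1. rewrite Hor in H1. destruct e; rewrite Hs in H1; simpl in H1; [rewrite andb_false_r in H1|]; discriminate.
Qed.

Definition inlat (M N a b : Z) : bool :=
  ((a*M + b*N) mod (M*M+N*N) =? 0) && ((b*M - a*N) mod (M*M+N*N) =? 0).

Definition chkLat (M N : Z) : bool :=
  fa (fun u1 => fa (fun u2 => Bool.eqb (inlat M N u1 u2)
     (check_sym (transl u1 u2) false || check_sym (transl u1 u2) true)) zr20) zr20.

Lemma lat_of M N : chkLat M N = true ->
  (forall a b, inlat M N (a mod 20) (b mod 20) = true -> exists x y, a = x*M - y*N /\ b = x*N + y*M) ->
  (forall x y, inlat M N ((x*M - y*N) mod 20) ((x*N + y*M) mod 20) = true) ->
  lattice_generated D M N.
Proof.
  intros H H1 H2 a b. split.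
  - intros [e He]. unfold transl in He.
    apply (sym_shift _ _ _ _ _ (a mod 20) (b mod 20)) in He; [|rewrite Z.mod_mod; lia|rewrite Z.mod_mod; lia].
    apply check_sym_complete in He.
    pose proof (fa_spec _ _ (fa_spec _ _ H _ (In_mod20 a)) _ (In_mod20 b)) as H3.
    cbv beta in H3. apply Bool.eqb_prop in H3. unfold transl in H3.
    apply H1. rewrite H3. destruct e; rewrite He; [apply orb_true_r|reflexivity].
  - intros [x [y [-> ->]]].
    pose proof (fa_spec _ _ (fa_spec _ _ H _ (In_mod20 (x*M - y*N))) _ (In_mod20 (x*N + y*M))) as H3.
    cbv beta in H3. apply Bool.eqb_prop in H3. rewrite H2 in H3.
    symmetry in H3. apply orb_true_iff in H3.
    destruct H3 as [H3|H3]; [exists false|exists true]; apply check_sym_sound in H3;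
    unfold transl in *;
    (eapply sym_shift; [| |exact H3]; rewrite Z.mod_mod; lia).
Qed.

Definition chkOrd (n : Z) : bool :=
  fa (fun i => fa (fun k => Bool.eqb (D (i,k+n)) (D (i,k)) && Bool.eqb (D (k+n,i)) (D (k,i))) zr20 &&
    fa (fun m => if (0 <? m) && (m <? n) then
        ex (fun k => negb (Bool.eqb (D (i,k+m)) (D (i,k)))) zr20 &&
        ex (fun k => negb (Bool.eqb (D (k+m,i)) (D (k,i)))) zr20 else true) zr20) zr20.

Lemma ord_of n : 0 < n <= 20 -> chkOrd n = true -> has_order D n.
Proof.
  intros Hn H. split; intros i; (split; [lia|split]);
  pose proof (fa_spec _ _ H _ (In_mod20 i)) as H1; cbv beta in H1;
  apply andb_prop in H1; destruct H1 as [H1 H2].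
  - intros k. pose proof (fa_spec _ _ H1 _ (In_mod20 k)) as H3. cbv beta in H3.
    apply andb_prop in H3. destruct H3 as [H3 _]. apply Bool.eqb_prop in H3.
    transitivity (D (i mod 20, k mod 20 + n)); [apply D_eq; [rewrite Z.mod_mod|Z.div_mod_to_equations]; lia|].
    rewrite H3. apply D_eq; rewrite Z.mod_mod; lia.
  - intros m Hm Hp. assert (Hin : In m zr20) by (apply In_zr20; lia).
    pose proof (fa_spec _ _ H2 _ Hin) as H3. cbv beta in H3.
    replace ((0 <? m) && (m <? n)) with true in H3 by (symmetry; apply andb_true_iff; split; apply Z.ltb_lt; lia).
    apply andb_prop in H3. destruct H3 as [H3 _]. apply ex_spec in H3. destruct H3 as [k [_ Hk]].
    apply negb_true_iff in Hk. specialize (Hp k). cbv beta in Hp.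
    rewrite (D_eq (i mod 20) (k+m) i (k+m)), (D_eq (i mod 20) k i k) in Hk by (rewrite ?Z.mod_mod; lia).
    rewrite Hp, Bool.eqb_reflx in Hk. discriminate.
  - intros k. pose proof (fa_spec _ _ H1 _ (In_mod20 k)) as H3. cbv beta in H3.
    apply andb_prop in H3. destruct H3 as [_ H3]. apply Bool.eqb_prop in H3.
    transitivity (D (k mod 20 + n, i mod 20)); [apply D_eq; [Z.div_mod_to_equations|rewrite Z.mod_mod]; lia|].
    rewrite H3. apply D_eq; rewrite Z.mod_mod; lia.
  - intros m Hm Hp. assert (Hin : In m zr20) by (apply In_zr20; lia).
    pose proof (fa_spec _ _ H2 _ Hin) as H3. cbv beta in H3.
    replace ((0 <? m) && (m <? n)) with true in H3 by (symmetry; apply andb_true_iff; split; apply Z.ltb_lt; lia).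
    apply andb_prop in H3. destruct H3 as [_ H3]. apply ex_spec in H3. destruct H3 as [k [_ Hk]].
    apply negb_true_iff in Hk. specialize (Hp k). cbv beta in Hp.
    rewrite (D_eq (k+m) (i mod 20) (k+m) i), (D_eq k (i mod 20) k i) in Hk by (rewrite ?Z.mod_mod; lia).
    rewrite Hp, Bool.eqb_reflx in Hk. discriminate.
Qed.

Lemma periodic : doubly_periodic D.
Proof.
  exists 20. split; [lia|]. intros i j. split; apply D_eq; Z.div_mod_to_equations; lia.
Qed.

End S.

Lemma hin1_a a b : inlat 2 4 (a mod 20) (b mod 20) = true -> exists x y, a = x*2 - y*4 /\ b = x*4 + y*2.
Proof.
  unfold inlat. intros H. apply andb_prop in H. destruct H as [H1 H2].
  apply Z.eqb_eq in H1. apply Z.eqb_eq in H2.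
  exists ((2*a + 4*b)/20), ((2*b - 4*a)/20). Z.div_mod_to_equations; lia.
Qed.
Lemma hin2_a x y : inlat 2 4 ((x*2 - y*4) mod 20) ((x*4 + y*2) mod 20) = true.
Proof.
  unfold inlat. apply andb_true_iff. split; apply Z.eqb_eq; Z.div_mod_to_equations; lia.
Qed.
Lemma hin1_b a b : inlat (-2) 6 (a mod 20) (b mod 20) = true -> exists x y, a = x*(-2) - y*6 /\ b = x*6 + y*(-2).
Proof.
  unfold inlat. intros H. apply andb_prop in H. destruct H as [H1 H2].
  apply Z.eqb_eq in H1. apply Z.eqb_eq in H2.
  exists ((-2*a + 6*b)/40), ((-2*b - 6*a)/40). Z.div_mod_to_equations; lia.
Qed.
Lemma hin2_b x y : inlat (-2) 6 ((x*(-2) - y*6) mod 20) ((x*6 + y*(-2)) mod 20) = true.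
Proof.
  unfold inlat. apply andb_true_iff. split; apply Z.eqb_eq; Z.div_mod_to_equations; lia.
Qed.

Definition mk (m : mark) : bool := match m with Open => false | Filled => true end.

Lemma build S rows syms M N n mc mz :
  sub_marks S mc mz -> side_vec (sub_level S) 1 2 = (M,N) -> 0 < n <= 20 ->
  (forall a b, inlat M N (a mod 20) (b mod 20) = true -> exists x y, a = x*M - y*N /\ b = x*N + y*M) ->
  (forall x y, inlat M N ((x*M - y*N) mod 20) ((x*N + y*M) mod 20) = true) ->
  chkW rows && chkF rows && chkIso rows syms && chkNoRefl rows && chkLat rows M N && chkOrd rows n = true ->
  check_sym rows (qt 1 1) (mk mc) = true ->
  check_sym rows (qt (1 + (M - N)) (1 + (N + M))) (mk mz) = true ->
  exists D M1 N1, M1*M1+N1*N1 = 5 /\ in_subspecies S D M1 N1 /\ has_order D n.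
Proof.
  intros HS Hsv Hn H1 H2 Hc Hq1 Hq2.
  apply andb_prop in Hc; destruct Hc as [Hc HO].
  apply andb_prop in Hc; destruct Hc as [Hc HL].
  apply andb_prop in Hc; destruct Hc as [Hc HR].
  apply andb_prop in Hc; destruct Hc as [Hc HI].
  apply andb_prop in Hc; destruct Hc as [HW HF].
  exists (tbl rows), 1, 2. split; [reflexivity|split].
  - split; [|split].
    + split; [split; [apply periodic | apply not_falls; auto] | split].
      * apply (isonemal_of _ syms); auto.
      * split.
        -- exists (qt 1 1), (mk mc). split; [apply check_sym_sound; exact Hq1|].
           split; [reflexivity|discriminate].
        -- apply noRefl; auto.
    + split; reflexivity.
    + exists 1, 1, mc, mz. split; [exact HS|]. rewrite Hsv. cbn [fst snd].
      split; [apply lat_of; auto|].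
      split; split; [reflexivity| |replace (1 + (M - N) + (1 + (N + M))) with (2*(1+M)) by ring; rewrite Z.even_mul; reflexivity|]; apply check_sym_sound.
      * destruct mc; exact Hq1.
      * destruct mz; exact Hq2.
  - apply ord_of; auto.
Qed.
Definition rows_S33_3 : list Z := [248050; 247025; 823075; 806675; 586300; 323900; 992200; 988100; 146575; 80975; 248050; 247025; 823075; 806675; 586300; 323900; 992200; 988100; 146575; 80975].
Definition syms_S33_3 : list (gmap * bool) := [(GMap false false false 0 0, false);
  (GMap false false false 0 10, false);
  (GMap false false false 2 4, false);
  (GMap false false false 2 14, false);
  (GMap false false false 4 8, false);
  (GMap false false false 4 18, false);
  (GMap false false false 6 2, false);
  (GMap false false false 6 12, false);
  (GMap false false false 8 6, false);
  (GMap false false false 8 16, false);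
  (GMap false false false 10 0, false);
  (GMap false false false 10 10, false);
  (GMap false false false 12 4, false);
  (GMap false false false 12 14, false);
  (GMap false false false 14 8, false);
  (GMap false false false 14 18, false);
  (GMap false false false 16 2, false);
  (GMap false false false 16 12, false);
  (GMap false false false 18 6, false);
  (GMap false false false 18 16, false);
  (GMap false true true 1 1, false);
  (GMap false true true 1 11, false);
  (GMap false true true 3 5, false);
  (GMap false true true 3 15, false);
  (GMap false true true 5 9, false);
  (GMap false true true 5 19, false);
  (GMap false true true 7 3, false);
  (GMap false true true 7 13, false);
  (GMap false true true 9 7, false);
  (GMap false true true 9 17, false);
  (GMap false true true 11 1, false);
  (GMap false true true 11 11, false);
  (GMap false true true 13 5, false);
  (GMap false true true 13 15, false);
  (GMap false true true 15 9, false);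
  (GMap false true true 15 19, false);
  (GMap false true true 17 3, false);
  (GMap false true true 17 13, false);
  (GMap false true true 19 7, false);
  (GMap false true true 19 17, false);
  (GMap true false true 0 1, false);
  (GMap true false true 0 11, false);
  (GMap true false true 2 5, false);
  (GMap true false true 2 15, false);
  (GMap true false true 4 9, false);
  (GMap true false true 4 19, false);
  (GMap true false true 6 3, false);
  (GMap true false true 6 13, false);
  (GMap true false true 8 7, false);
  (GMap true false true 8 17, false);
  (GMap true false true 10 1, false);
  (GMap true false true 10 11, false);
  (GMap true false true 12 5, false);
  (GMap true false true 12 15, false);
  (GMap true false true 14 9, false);
  (GMap true false true 14 19, false);
  (GMap true false true 16 3, false);
  (GMap true false true 16 13, false);
  (GMap true false true 18 7, false);
  (GMap true false true 18 17, false);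
  (GMap true true false 1 0, false);
  (GMap true true false 1 10, false);
  (GMap true true false 3 4, false);
  (GMap true true false 3 14, false);
  (GMap true true false 5 8, false);
  (GMap true true false 5 18, false);
  (GMap true true false 7 2, false);
  (GMap true true false 7 12, false);
  (GMap true true false 9 6, false);
  (GMap true true false 9 16, false);
  (GMap true true false 11 0, false);
  (GMap true true false 11 10, false);
  (GMap true true false 13 4, false);
  (GMap true true false 13 14, false);
  (GMap true true false 15 8, false);
  (GMap true true false 15 18, false);
  (GMap true true false 17 2, false);
  (GMap true true false 17 12, false);
  (GMap true true false 19 6, false);
  (GMap true true false 19 16, false)].
Definition rows_S35_3 : list Z := [3075; 3075; 49200; 49200; 787200; 787200; 12300; 12300; 196800; 196800; 3075; 3075; 49200; 49200; 787200; 787200; 12300; 12300; 196800; 196800].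
Definition syms_S35_3 : list (gmap * bool) := [(GMap false false false 0 0, false);
  (GMap false false false 0 10, false);
  (GMap false false false 2 4, false);
  (GMap false false false 2 14, false);
  (GMap false false false 4 8, false);
  (GMap false false false 4 18, false);
  (GMap false false false 6 2, false);
  (GMap false false false 6 12, false);
  (GMap false false false 8 6, false);
  (GMap false false false 8 16, false);
  (GMap false false false 10 0, false);
  (GMap false false false 10 10, false);
  (GMap false false false 12 4, false);
  (GMap false false false 12 14, false);
  (GMap false false false 14 8, false);
  (GMap false false false 14 18, false);
  (GMap false false false 16 2, false);
  (GMap false false false 16 12, false);
  (GMap false false false 18 6, false);
  (GMap false false false 18 16, false);
  (GMap false true true 1 1, false);
  (GMap false true true 1 11, false);
  (GMap false true true 3 5, false);
  (GMap false true true 3 15, false);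
  (GMap false true true 5 9, false);
  (GMap false true true 5 19, false);
  (GMap false true true 7 3, false);
  (GMap false true true 7 13, false);
  (GMap false true true 9 7, false);
  (GMap false true true 9 17, false);
  (GMap false true true 11 1, false);
  (GMap false true true 11 11, false);
  (GMap false true true 13 5, false);
  (GMap false true true 13 15, false);
  (GMap false true true 15 9, false);
  (GMap false true true 15 19, false);
  (GMap false true true 17 3, false);
  (GMap false true true 17 13, false);
  (GMap false true true 19 7, false);
  (GMap false true true 19 17, false);
  (GMap true false true 0 1, true);
  (GMap true false true 0 11, true);
  (GMap true false true 2 5, true);
  (GMap true false true 2 15, true);
  (GMap true false true 4 9, true);
  (GMap true false true 4 19, true);
  (GMap true false true 6 3, true);
  (GMap true false true 6 13, true);
  (GMap true false true 8 7, true);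
  (GMap true false true 8 17, true);
  (GMap true false true 10 1, true);
  (GMap true false true 10 11, true);
  (GMap true false true 12 5, true);
  (GMap true false true 12 15, true);
  (GMap true false true 14 9, true);
  (GMap true false true 14 19, true);
  (GMap true false true 16 3, true);
  (GMap true false true 16 13, true);
  (GMap true false true 18 7, true);
  (GMap true false true 18 17, true);
  (GMap true true false 1 0, true);
  (GMap true true false 1 10, true);
  (GMap true true false 3 4, true);
  (GMap true true false 3 14, true);
  (GMap true true false 5 8, true);
  (GMap true true false 5 18, true);
  (GMap true true false 7 2, true);
  (GMap true true false 7 12, true);
  (GMap true true false 9 6, true);
  (GMap true true false 9 16, true);
  (GMap true true false 11 0, true);
  (GMap true true false 11 10, true);
  (GMap true true false 13 4, true);
  (GMap true true false 13 14, true);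
  (GMap true true false 15 8, true);
  (GMap true true false 15 18, true);
  (GMap true true false 17 2, true);
  (GMap true true false 17 12, true);
  (GMap true true false 19 6, true);
  (GMap true true false 19 16, true)].
Definition rows_S38 : list Z := [63426; 64449; 33759; 17391; 508431; 770319; 253704; 257796; 135036; 69564; 985149; 984126; 1014816; 1031184; 540144; 278256; 794871; 790779; 913539; 979011].
Definition syms_S38 : list (gmap * bool) := [(GMap false false false 0 0, false);
  (GMap false false false 0 10, true);
  (GMap false false false 2 4, true);
  (GMap false false false 2 14, false);
  (GMap false false false 4 8, false);
  (GMap false false false 4 18, true);
  (GMap false false false 6 2, false);
  (GMap false false false 6 12, true);
  (GMap false false false 8 6, true);
  (GMap false false false 8 16, false);
  (GMap false false false 10 0, true);
  (GMap false false false 10 10, false);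
  (GMap false false false 12 4, false);
  (GMap false false false 12 14, true);
  (GMap false false false 14 8, true);
  (GMap false false false 14 18, false);
  (GMap false false false 16 2, true);
  (GMap false false false 16 12, false);
  (GMap false false false 18 6, false);
  (GMap false false false 18 16, true);
  (GMap false true true 1 1, false);
  (GMap false true true 1 11, true);
  (GMap false true true 3 5, true);
  (GMap false true true 3 15, false);
  (GMap false true true 5 9, false);
  (GMap false true true 5 19, true);
  (GMap false true true 7 3, false);
  (GMap false true true 7 13, true);
  (GMap false true true 9 7, true);
  (GMap false true true 9 17, false);
  (GMap false true true 11 1, true);
  (GMap false true true 11 11, false);
  (GMap false true true 13 5, false);
  (GMap false true true 13 15, true);
  (GMap false true true 15 9, true);
  (GMap false true true 15 19, false);
  (GMap false true true 17 3, true);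
  (GMap false true true 17 13, false);
  (GMap false true true 19 7, false);
  (GMap false true true 19 17, true);
  (GMap true false true 0 1, false);
  (GMap true false true 0 11, true);
  (GMap true false true 2 5, true);
  (GMap true false true 2 15, false);
  (GMap true false true 4 9, false);
  (GMap true false true 4 19, true);
  (GMap true false true 6 3, false);
  (GMap true false true 6 13, true);
  (GMap true false true 8 7, true);
  (GMap true false true 8 17, false);
  (GMap true false true 10 1, true);
  (GMap true false true 10 11, false);
  (GMap true false true 12 5, false);
  (GMap true false true 12 15, true);
  (GMap true false true 14 9, true);
  (GMap true false true 14 19, false);
  (GMap true false true 16 3, true);
  (GMap true false true 16 13, false);
  (GMap true false true 18 7, false);
  (GMap true false true 18 17, true);
  (GMap true true false 1 0, false);
  (GMap true true false 1 10, true);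
  (GMap true true false 3 4, true);
  (GMap true true false 3 14, false);
  (GMap true true false 5 8, false);
  (GMap true true false 5 18, true);
  (GMap true true false 7 2, false);
  (GMap true true false 7 12, true);
  (GMap true true false 9 6, true);
  (GMap true true false 9 16, false);
  (GMap true true false 11 0, true);
  (GMap true true false 11 10, false);
  (GMap true true false 13 4, false);
  (GMap true true false 13 14, true);
  (GMap true true false 15 8, true);
  (GMap true true false 15 18, false);
  (GMap true true false 17 2, true);
  (GMap true true false 17 12, false);
  (GMap true true false 19 6, false);
  (GMap true true false 19 16, true)].
Definition rows_S33_4 : list Z := [984125; 985150; 1014800; 1031200; 278000; 540400; 790775; 794875; 913475; 979075; 63425; 64450; 17375; 33775; 508175; 770575; 253700; 257800; 69500; 135100].
Definition syms_S33_4 : list (gmap * bool) := [(GMap false false false 0 0, false);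
  (GMap false false false 2 14, false);
  (GMap false false false 4 8, false);
  (GMap false false false 6 2, false);
  (GMap false false false 8 16, false);
  (GMap false false false 10 10, false);
  (GMap false false false 12 4, false);
  (GMap false false false 14 18, false);
  (GMap false false false 16 12, false);
  (GMap false false false 18 6, false);
  (GMap false true true 1 1, false);
  (GMap false true true 3 15, false);
  (GMap false true true 5 9, false);
  (GMap false true true 7 3, false);
  (GMap false true true 9 17, false);
  (GMap false true true 11 11, false);
  (GMap false true true 13 5, false);
  (GMap false true true 15 19, false);
  (GMap false true true 17 13, false);
  (GMap false true true 19 7, false);
  (GMap true false true 0 1, false);
  (GMap true false true 2 15, false);
  (GMap true false true 4 9, false);
  (GMap true false true 6 3, false);
  (GMap true false true 8 17, false);
  (GMap true false true 10 11, false);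
  (GMap true false true 12 5, false);
  (GMap true false true 14 19, false);
  (GMap true false true 16 13, false);
  (GMap true false true 18 7, false);
  (GMap true true false 1 0, false);
  (GMap true true false 3 14, false);
  (GMap true true false 5 8, false);
  (GMap true true false 7 2, false);
  (GMap true true false 9 16, false);
  (GMap true true false 11 10, false);
  (GMap true true false 13 4, false);
  (GMap true true false 15 18, false);
  (GMap true true false 17 12, false);
  (GMap true true false 19 6, false)].
Definition rows_S35_4 : list Z := [524352; 32772; 8193; 66048; 16512; 1032; 258; 131088; 32772; 264192; 66048; 4128; 1032; 524352; 131088; 8193; 264192; 16512; 4128; 258].
Definition syms_S35_4 : list (gmap * bool) := [(GMap false false false 0 0, false);
  (GMap false false false 2 14, false);
  (GMap false false false 4 8, false);
  (GMap false false false 6 2, false);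
  (GMap false false false 8 16, false);
  (GMap false false false 10 10, false);
  (GMap false false false 12 4, false);
  (GMap false false false 14 18, false);
  (GMap false false false 16 12, false);
  (GMap false false false 18 6, false);
  (GMap false true true 1 1, false);
  (GMap false true true 3 15, false);
  (GMap false true true 5 9, false);
  (GMap false true true 7 3, false);
  (GMap false true true 9 17, false);
  (GMap false true true 11 11, false);
  (GMap false true true 13 5, false);
  (GMap false true true 15 19, false);
  (GMap false true true 17 13, false);
  (GMap false true true 19 7, false);
  (GMap true false true 0 1, true);
  (GMap true false true 2 15, true);
  (GMap true false true 4 9, true);
  (GMap true false true 6 3, true);
  (GMap true false true 8 17, true);
  (GMap true false true 10 11, true);
  (GMap true false true 12 5, true);
  (GMap true false true 14 19, true);
  (GMap true false true 16 13, true);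
  (GMap true false true 18 7, true);
  (GMap true true false 1 0, true);
  (GMap true true false 3 14, true);
  (GMap true true false 5 8, true);
  (GMap true true false 7 2, true);
  (GMap true true false 9 16, true);
  (GMap true true false 11 10, true);
  (GMap true true false 13 4, true);
  (GMap true true false 15 18, true);
  (GMap true true false 17 12, true);
  (GMap true true false 19 6, true)].
Definition rows_S37 : list Z := [491570; 196729; 221695; 111614; 12920; 31024; 130870; 261659; 161795; 602119; 996895; 924479; 525095; 1939; 401395; 737249; 206720; 496384; 1045345; 1040819].
Definition syms_S37 : list (gmap * bool) := [(GMap false false false 0 0, false);
  (GMap false false false 2 14, true);
  (GMap false false false 4 8, false);
  (GMap false false false 6 2, true);
  (GMap false false false 8 16, false);
  (GMap false false false 10 10, true);
  (GMap false false false 12 4, false);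
  (GMap false false false 14 18, true);
  (GMap false false false 16 12, false);
  (GMap false false false 18 6, true);
  (GMap false true true 1 1, false);
  (GMap false true true 3 15, true);
  (GMap false true true 5 9, false);
  (GMap false true true 7 3, true);
  (GMap false true true 9 17, false);
  (GMap false true true 11 11, true);
  (GMap false true true 13 5, false);
  (GMap false true true 15 19, true);
  (GMap false true true 17 13, false);
  (GMap false true true 19 7, true);
  (GMap true false true 0 1, false);
  (GMap true false true 2 15, true);
  (GMap true false true 4 9, false);
  (GMap true false true 6 3, true);
  (GMap true false true 8 17, false);
  (GMap true false true 10 11, true);
  (GMap true false true 12 5, false);
  (GMap true false true 14 19, true);
  (GMap true false true 16 13, false);
  (GMap true false true 18 7, true);
  (GMap true true false 1 0, false);
  (GMap true true false 3 14, true);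
  (GMap true true false 5 8, false);
  (GMap true true false 7 2, true);
  (GMap true true false 9 16, false);
  (GMap true true false 11 10, true);
  (GMap true true false 13 4, false);
  (GMap true true false 15 18, true);
  (GMap true true false 17 12, false);
  (GMap true true false 19 6, true)].

Lemma ex_S33_3 : exists D M1 N1, M1*M1+N1*N1 = 5 /\ in_subspecies S33_3 D M1 N1 /\ has_order D 10.
Proof.
  apply (build S33_3 rows_S33_3 syms_S33_3 2 4 10 Open Open).
  - split; reflexivity.
  - reflexivity.
  - lia.
  - apply hin1_a.
  - apply hin2_a.
  - vm_compute; reflexivity.
  - vm_compute; reflexivity.
  - vm_compute; reflexivity.
Qed.

Lemma ex_S35_3 : exists D M1 N1, M1*M1+N1*N1 = 5 /\ in_subspecies S35_3 D M1 N1 /\ has_order D 10.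
Proof.
  apply (build S35_3 rows_S35_3 syms_S35_3 2 4 10 Filled Filled).
  - split; reflexivity.
  - reflexivity.
  - lia.
  - apply hin1_a.
  - apply hin2_a.
  - vm_compute; reflexivity.
  - vm_compute; reflexivity.
  - vm_compute; reflexivity.
Qed.

Lemma ex_S38 : exists D M1 N1, M1*M1+N1*N1 = 5 /\ in_subspecies S38 D M1 N1 /\ has_order D 20.
Proof.
  apply (build S38 rows_S38 syms_S38 2 4 20 Open Filled).
  - discriminate.
  - reflexivity.
  - lia.
  - apply hin1_a.
  - apply hin2_a.
  - vm_compute; reflexivity.
  - vm_compute; reflexivity.
  - vm_compute; reflexivity.
Qed.

Lemma ex_S33_4 : exists D M1 N1, M1*M1+N1*N1 = 5 /\ in_subspecies S33_4 D M1 N1 /\ has_order D 20.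
Proof.
  apply (build S33_4 rows_S33_4 syms_S33_4 (-2) 6 20 Open Open).
  - split; reflexivity.
  - reflexivity.
  - lia.
  - apply hin1_b.
  - apply hin2_b.
  - vm_compute; reflexivity.
  - vm_compute; reflexivity.
  - vm_compute; reflexivity.
Qed.

Lemma ex_S35_4 : exists D M1 N1, M1*M1+N1*N1 = 5 /\ in_subspecies S35_4 D M1 N1 /\ has_order D 20.
Proof.
  apply (build S35_4 rows_S35_4 syms_S35_4 (-2) 6 20 Filled Filled).
  - split; reflexivity.
  - reflexivity.
  - lia.
  - apply hin1_b.
  - apply hin2_b.
  - vm_compute; reflexivity.
  - vm_compute; reflexivity.
  - vm_compute; reflexivity.
Qed.

Lemma ex_S37 : exists D M1 N1, M1*M1+N1*N1 = 5 /\ in_subspecies S37 D M1 N1 /\ has_order D 20.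
Proof.
  apply (build S37 rows_S37 syms_S37 (-2) 6 20 Open Filled).
  - discriminate.
  - reflexivity.
  - lia.
  - apply hin1_b.
  - apply hin2_b.
  - vm_compute; reflexivity.
  - vm_compute; reflexivity.
  - vm_compute; reflexivity.
Qed.

Lemma m_exists M1 N1 : M1*M1+N1*N1 = 5 -> exists m, (m = 2 \/ m = 3) /\
  (m*N1 - M1) mod 5 = 0 /\ (m*M1 + N1) mod 5 = 0.
Proof.
  intros H.
  assert (HM : M1 = -2 \/ M1 = -1 \/ M1 = 0 \/ M1 = 1 \/ M1 = 2) by nia.
  assert (HN : N1 = -2 \/ N1 = -1 \/ N1 = 0 \/ N1 = 1 \/ N1 = 2) by nia.
  destruct HM as [-> | [-> | [-> | [-> | -> ]]]]; destruct HN as [-> | [-> | [-> | [-> | -> ]]]];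
  try discriminate H;
  first [ exists 2; split; [left; reflexivity | split; reflexivity]
        | exists 3; split; [right; reflexivity | split; reflexivity] ].
Qed.

Lemma cong4 m M1 N1 : (m = 2 \/ m = 3) -> (m*N1 - M1) mod 5 = 0 -> (m*M1 + N1) mod 5 = 0 ->
  (m*(N1+M1) - (M1-N1)) mod 5 = 0 /\ (m*(M1-N1) + (N1+M1)) mod 5 = 0.
Proof. intros [-> | ->] H1 H2; split; Z.div_mod_to_equations; lia. Qed.

Lemma forall_all S D M1 N1 : M1*M1+N1*N1 = 5 -> in_subspecies S D M1 N1 ->
  exists col1 col2, good_colouring D col1 /\ good_colouring D col2 /\ different_colourings col1 col2.
Proof.
  intros H5 [[Hfab [Hiso [_ Hp4]]] [_ [P1 [P2 [mc [mz [_ [HL [[_ Hh] _]]]]]]]]].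
  unfold qt in Hh.
  destruct (m_exists _ _ H5) as [m [Hm [Hc1 Hc2]]].
  destruct (cong4 _ _ _ Hm Hc1 Hc2) as [Hd1 Hd2].
  destruct S; cbn [sub_level side_vec fst snd] in HL;
  first [ exact (forall_part D M1 N1 m _ _ _ Hm Hc1 Hc2 HL Hh Hp4 Hiso)
        | exact (forall_part D (M1-N1) (N1+M1) m _ _ _ Hm Hd1 Hd2 HL Hh Hp4 Hiso) ].
Qed.

Theorem theorem2 : forall S : subspecies, exists n : Z,
  (exists D M1 N1, M1 * M1 + N1 * N1 = 5 /\ in_subspecies S D M1 N1 /\ has_order D n) /\
  (forall D M1 N1, M1 * M1 + N1 * N1 = 5 -> in_subspecies S D M1 N1 -> has_order D n ->
     exists col1 col2, good_colouring D col1 /\ good_colouring D col2 /\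
       different_colourings col1 col2).
Proof.
  intros S. destruct S;
  [exists 10 | exists 20 | exists 10 | exists 20 | exists 20 | exists 20]; split;
  try (intros D M1 N1 H5 Hin _; exact (forall_all _ D M1 N1 H5 Hin)).
  - exact ex_S33_3.
  - exact ex_S33_4.
  - exact ex_S35_3.
  - exact ex_S35_4.
  - exact ex_S37.
  - exact ex_S38.
Qed.
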